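(* Let $s\ge 2$ be an even integer, $n=s^2$, and $k\ge1$. Let $\mathcal{G}^{2d}$ be the $s\times s$ two-dimensional grid graph, whose nodes are the pairs $(a,b)$ with $1\le a,b\le s$ and in which $(a,b)$ and $(a',b')$ are adjacent iff $|a-a'|+|b-b'|=1$. Then $$M^{\mathcal{G}^{2d}}_{k,n}\le 2M^C_{k,\,n/2-\sqrt n/2}+M^C_{k,\sqrt n}+2 .$$
   Context: For a graph $G$ on $n$ nodes, a measurement matrix for $G$ is a $0$-$1$ matrix with columns indexed by the nodes in which every nonzero row has a support that induces a connected subgraph of $G$. A vector is $k$-sparse if it has at most $k$ nonzero entries. $A$ identifies all $k$-sparse vectors if $Ax_1\ne Ax_2$ for every two distinct $k$-sparse $x_1,x_2\in\mathbb{R}^n$. $M^G_{k,n}$ is the minimum number of rows of a measurement matrix for $G$ that identifies all $k$-sparse vectors. $M^C_{k,N}$ is the minimum number of rows of an arbitrary $0$-$1$ matrix with $N$ columns that identifies all $k$-sparse vectors in $\mathbb{R}^N$. *)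

(* Defs.v *)
From Stdlib Require Import Reals Arith List.
Open Scope R_scope.

Fixpoint sum_upto (N : nat) (f : nat -> R) : R :=
  match N with
  | O => 0
  | S N' => sum_upto N' f + f N'
  end.

(* A 0-1 matrix with m rows and N columns is encoded as A : nat -> nat -> bool,
   entry (i,j) meaningful for i < m, j < N.  Vectors x in R^N are x : nat -> R
   with coordinates j < N. *)
Definition mat_apply (N : nat) (A : nat -> nat -> bool) (x : nat -> R) (i : nat) : R :=
  sum_upto N (fun j => if A i j then x j else 0).

Definition k_sparse (k N : nat) (x : nat -> R) : Prop :=
  exists S : list nat, (length S <= k)%nat /\ NoDup S /\
    forall j, (j < N)%nat -> ~ In j S -> x j = 0.

Definition identifies (k m N : nat) (A : nat -> nat -> bool) : Prop :=
  forall x1 x2 : nat -> R,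
    k_sparse k N x1 -> k_sparse k N x2 ->
    (exists j, (j < N)%nat /\ x1 j <> x2 j) ->
    exists i, (i < m)%nat /\ mat_apply N A x1 i <> mat_apply N A x2 i.

Fixpoint path_in (adj : nat -> nat -> Prop) (S : nat -> Prop) (u : nat) (p : list nat) : Prop :=
  match p with
  | nil => True
  | w :: p' => S w /\ adj u w /\ path_in adj S w p'
  end.

Definition last_of (u : nat) (p : list nat) : nat := last p u.

Definition induces_connected (adj : nat -> nat -> Prop) (S : nat -> Prop) : Prop :=
  forall u v, S u -> S v -> exists p, path_in adj S u p /\ last_of u p = v.

Definition row_support (n : nat) (A : nat -> nat -> bool) (i : nat) : nat -> Prop :=
  fun j => (j < n)%nat /\ A i j = true.

Definition measurement_matrix (n : nat) (adj : nat -> nat -> Prop) (m : nat)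
    (A : nat -> nat -> bool) : Prop :=
  forall i, (i < m)%nat ->
    (exists j, (j < n)%nat /\ A i j = true) ->
    induces_connected adj (row_support n A i).

Definition is_min (P : nat -> Prop) (m : nat) : Prop :=
  P m /\ forall m', P m' -> (m <= m')%nat.

Definition MG_is (k n : nat) (adj : nat -> nat -> Prop) (m : nat) : Prop :=
  is_min (fun r => exists A, measurement_matrix n adj r A /\ identifies k r n A) m.

Definition MC_is (k N m : nat) : Prop :=
  is_min (fun r => exists A, identifies k r N A) m.

Definition grid_coord (s j : nat) : nat * nat := (j / s + 1, j mod s + 1)%nat.

Definition absdiff (a b : nat) : nat := (a - b + (b - a))%nat.

Definition grid_adj (s : nat) (u v : nat) : Prop :=
  (u < s * s)%nat /\ (v < s * s)%nat /\
  (absdiff (fst (grid_coord s u)) (fst (grid_coord s v))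
   + absdiff (snd (grid_coord s u)) (snd (grid_coord s v)) = 1)%nat.

(* Main.v *)
Require Import Defs.
From Stdlib Require Import Reals Arith List Lia Lra Bool Permutation Classical.
Local Open Scope nat_scope.

Definition reach (adj : nat -> nat -> Prop) (S : nat -> Prop) u v :=
  exists p, path_in adj S u p /\ last_of u p = v.

Lemma last_nonnil {A} (l : list A) d d' : l <> nil -> last l d = last l d'.
Proof. induction l; [congruence|]. intros _. destruct l; auto. simpl. apply IHl. discriminate. Qed.

Lemma last_cons_gen {A} (l : list A) w u : last (w :: l) u = last l w.
Proof. destruct l; auto. change (last (a :: l) u = last (a :: l) w). apply last_nonnil. discriminate. Qed.

Lemma reach_refl adj S u : reach adj S u u.
Proof. exists nil. split; simpl; auto. Qed.

Lemma reach_step adj (S : nat -> Prop) u v : S v -> adj u v -> reach adj S u v.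
Proof. intros. exists (v :: nil). simpl. auto. Qed.

Lemma reach_trans adj S u v w : reach adj S u v -> reach adj S v w -> reach adj S u w.
Proof.
  intros [p [Hp Hl]] [q [Hq Hl']]. exists (p ++ q). unfold last_of in *.
  revert u Hp Hl. induction p as [|a p IH]; intros u Hp Hl.
  - simpl in *. subst. auto.
  - destruct Hp as [H1 [H2 H3]]. rewrite last_cons_gen in Hl.
    destruct (IH a H3 Hl) as [IH1 IH2]. simpl app. rewrite last_cons_gen. simpl. auto.
Qed.

Lemma reach_mono adj (S S' : nat -> Prop) u v : (forall x, S x -> S' x) -> reach adj S u v -> reach adj S' u v.
Proof.
  intros HS [p [Hp Hl]]. exists p. split; auto. clear Hl. revert u Hp.
  induction p; simpl; intros; auto. destruct Hp as [? [? ?]]. eauto.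
Qed.

Lemma reach_sym adj (S : nat -> Prop) u v : (forall a b, adj a b -> adj b a) -> S u ->
  reach adj S u v -> reach adj S v u.
Proof.
  intros Hs Su [p [Hp Hl]]. unfold last_of in Hl. revert u Su Hp Hl. induction p as [|a p IH]; intros u Su Hp Hl.
  - simpl in Hl. subst. apply reach_refl.
  - destruct Hp as [H1 [H2 H3]]. rewrite last_cons_gen in Hl.
    apply reach_trans with a; auto. apply reach_step; auto.
Qed.

Lemma coords b q c : (c < b)%nat -> ((q*b+c)/b = q /\ (q*b+c) mod b = c)%nat.
Proof. intros. assert (b<>0)%nat by lia. rewrite Nat.div_add_l, Nat.div_small by lia. split; [lia|].
 rewrite Nat.add_comm, Nat.Div0.mod_add. apply Nat.mod_small; lia. Qed.

Section Grid.
Variable s : nat.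
Hypothesis hs : (2 <= s)%nat.

Lemma node_lt r c : (r < s -> c < s -> r*s+c < s*s)%nat.
Proof. intros. nia. Qed.

Lemma node_decomp j : (j < s*s -> j = (j/s)*s + j mod s /\ j/s < s /\ j mod s < s)%nat.
Proof. intros. assert (s<>0)%nat by lia. pose proof (Nat.div_mod j s H0). pose proof (Nat.mod_upper_bound j s H0).
  split; [lia|]. split; auto. apply Nat.Div0.div_lt_upper_bound. lia. Qed.

Lemma grid_adj_sym u v : grid_adj s u v -> grid_adj s v u.
Proof. unfold grid_adj, absdiff, grid_coord; simpl. lia. Qed.

Lemma adj_right r c : (r < s -> c + 1 < s -> grid_adj s (r*s+c) (r*s+(c+1)))%nat.
Proof. intros. unfold grid_adj, absdiff, grid_coord; simpl.
  destruct (coords s r c) as [A1 A2]; try lia. destruct (coords s r (c+1)) as [B1 B2]; try lia.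
  rewrite A1, A2, B1, B2. repeat split; try apply node_lt; lia. Qed.

Lemma adj_down r c : (r + 1 < s -> c < s -> grid_adj s (r*s+c) ((r+1)*s+c))%nat.
Proof. intros. unfold grid_adj, absdiff, grid_coord; simpl.
  destruct (coords s r c) as [A1 A2]; try lia. destruct (coords s (r+1) c) as [B1 B2]; try lia.
  rewrite A1, A2, B1, B2. repeat split; try apply node_lt; lia. Qed.

Lemma Y_reach (Y : nat -> Prop) c0 : (c0 < s)%nat ->
  (forall r, r < s -> Y (r*s+c0))%nat ->
  (forall r c, r < s -> c < s -> Y (r*s+c) -> c0 <= c)%nat ->
  (forall r c c', r < s -> c < s -> Y (r*s+c) -> c0 <= c' <= c -> Y (r*s+c'))%nat ->
  forall j, (j < s*s)%nat -> Y j -> reach (grid_adj s) Y j c0.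
Proof.
  intros Hc0 H1 H2 H3 j Hj Yj.
  assert (Col : forall r, (r < s)%nat -> reach (grid_adj s) Y (r*s+c0) c0).
  { induction r; intros Hr. simpl. apply reach_refl.
    apply reach_trans with (r*s+c0)%nat; [|apply IHr; lia].
    apply reach_step; [apply H1; lia|]. apply grid_adj_sym. replace (S r) with (r+1)%nat by lia.
    apply adj_down; lia. }
  destruct (node_decomp j Hj) as [E [Hr Hc]]. set (r := (j/s)%nat) in *. set (c := (j mod s)%nat) in *.
  clearbody r c. rewrite E in Yj |- *. clear E j Hj.
  apply reach_trans with (r*s+c0)%nat; [|apply Col; auto].
  assert (Hc0c := H2 r c Hr Hc Yj).
  assert (Row : forall d, (c0 + d <= c)%nat -> reach (grid_adj s) Y (r*s+(c0+d)) (r*s+c0)).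
  { induction d; intros Hd. rewrite Nat.add_0_r. apply reach_refl.
    apply reach_trans with (r*s+(c0+d))%nat; [|apply IHd; lia].
    apply reach_step; [apply (H3 r c); auto; lia|]. apply grid_adj_sym.
    replace (c0 + S d)%nat with (c0+d+1)%nat by lia. apply adj_right; lia. }
  replace c with (c0 + (c - c0))%nat by lia. apply Row. lia.
Qed.

Lemma conn_from (Y S : nat -> Prop) (P : nat -> bool) c0 :
  (forall j, Y j -> (j < s*s)%nat) -> Y c0 ->
  (forall j, Y j -> reach (grid_adj s) Y j c0) ->
  (forall j, S j -> Y j \/ exists w, Y w /\ grid_adj s j w) ->
  (forall j, Y j -> S j) ->
  induces_connected (grid_adj s) S.
Proof.
  intros HYn HY0 HYr HSX HYS u v Su Sv.
  assert (G : forall u, S u -> reach (grid_adj s) S u c0).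
  { intros w Sw. destruct (HSX w Sw) as [Yw | [w' [Yw' A]]].
    - eapply reach_mono; [exact HYS|]. auto.
    - apply reach_trans with w'. apply reach_step; auto. eapply reach_mono; [exact HYS|]. auto. }
  change (reach (grid_adj s) S u v). apply reach_trans with c0; auto.
  apply reach_sym; auto. apply grid_adj_sym.
Qed.
End Grid.
Module P3M.
Section G.
Variables s m : nat.
Hypothesis hm : s = (2*m)%nat.
Hypothesis hs : (2 <= s)%nat.

Definition inU (p j : nat) : bool := negb (j mod s =? 0) && ((j/s) mod 2 =? p).
Definition inB (j : nat) : bool := j mod s =? 0.
Definition eU (p t : nat) : nat := ((2*(t/(s-1)) + p)*s + (1 + t mod (s-1)))%nat.
Definition decU (j : nat) : nat := ((j/s)/2*(s-1) + (j mod s - 1))%nat.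
Definition eB (t : nat) : nat := (t*s)%nat.
Definition decB (j : nat) : nat := (j/s)%nat.

Lemma inU_node p r c : (r < s -> c < s -> inU p (r*s+c) = negb (c =? 0) && (r mod 2 =? p))%nat.
Proof. intros. unfold inU. destruct (coords s r c) as [A B]; auto. rewrite A, B. auto. Qed.

Lemma bijU_a p : (p < 2)%nat -> forall t, (t < m*(s-1))%nat ->
  (eU p t < s*s)%nat /\ inU p (eU p t) = true /\ decU (eU p t) = t.
Proof.
  intros Hp t Ht. assert (s - 1 <> 0)%nat by lia.
  pose proof (Nat.div_mod t (s-1) H). pose proof (Nat.mod_upper_bound t (s-1) H).
  assert (Hq : (t/(s-1) < m)%nat) by (apply Nat.Div0.div_lt_upper_bound; lia).
  unfold eU, decU.
  set (q := (t/(s-1))%nat) in *. set (c := (t mod (s-1))%nat) in *. clearbody q c.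
  destruct (coords s (2*q+p) (1+c)) as [A B]; try lia.
  destruct (coords 2 q p) as [A2 B2]; auto. rewrite (Nat.mul_comm q 2) in A2, B2.
  repeat split.
  - apply (node_lt s hs); lia.
  - unfold inU. rewrite A, B, B2, Nat.eqb_refl. destruct c; reflexivity.
  - rewrite A, A2, B. lia.
Qed.

Lemma bijU_b p j : (j < s*s)%nat -> inU p j = true -> (decU j < m*(s-1))%nat /\ eU p (decU j) = j.
Proof.
  intros Hj Hin. destruct (node_decomp s hs j Hj) as [E [Hr Hc]].
  unfold decU, inU in *.
  set (r := (j/s)%nat) in *. set (c := (j mod s)%nat) in *. clearbody r c. subst j.
  apply andb_prop in Hin. destruct Hin as [H1 H2]. apply Nat.eqb_eq in H2.
  destruct c as [|c']; [discriminate|]. clear H1.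
  pose proof (Nat.div_mod r 2 ltac:(lia)). rewrite H2 in H.
  assert (Hr2 : (r/2 < m)%nat) by (apply Nat.Div0.div_lt_upper_bound; lia).
  set (q := (r/2)%nat) in *. clearbody q. replace (S c' - 1)%nat with c' by lia.
  split. nia.
  unfold eU. destruct (coords (s-1) q c') as [A B]; try lia.
Qed.

Lemma bijB_a t : (t < s)%nat -> (eB t < s*s)%nat /\ inB (eB t) = true /\ decB (eB t) = t.
Proof. intros. unfold eB, inB, decB. destruct (coords s t 0) as [A B]; try lia.
  rewrite Nat.add_0_r in A, B. rewrite A, B. repeat split; auto. nia. Qed.

Lemma bijB_b j : (j < s*s)%nat -> inB j = true -> (decB j < s)%nat /\ eB (decB j) = j.
Proof. intros Hj Hin. destruct (node_decomp s hs j Hj) as [E [Hr Hc]]. unfold inB, decB, eB in *.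
  apply Nat.eqb_eq in Hin. split; auto. lia. Qed.

Lemma conn_U p : (p < 2)%nat -> forall Ss : nat -> Prop,
  (forall j, (j < s*s)%nat -> inU p j = false -> Ss j) -> (forall j, Ss j -> (j < s*s)%nat) ->
  induces_connected (grid_adj s) Ss.
Proof.
  intros Hp Ss HYS HSn.
  set (Y := fun j => (j < s*s)%nat /\ inU p j = false).
  apply (conn_from s hs Y Ss (inU p) 0).
  - intros j [H _]; auto.
  - split; [nia|]. unfold inU. rewrite Nat.Div0.mod_0_l. reflexivity.
  - intros j [Hj Yj]. apply (Y_reach s hs); auto; try lia.
    + intros r Hr. split; [apply (node_lt s hs); lia|]. rewrite inU_node by lia. reflexivity.
    + intros r c c' Hr Hc [_ Hy] Hc'. split; [apply (node_lt s hs); lia|].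
      rewrite inU_node in * by lia. destruct (Nat.eq_dec c' 0). subst; reflexivity.
      destruct c; [lia|]. destruct c'; [lia|]. simpl in *. auto.
    + split; auto.
  - intros j Sj. pose proof (HSn j Sj) as Hj. destruct (inU p j) eqn:E; [right|left; split; auto].
    destruct (node_decomp s hs j Hj) as [Ej [Hr Hc]].
    set (r := (j/s)%nat) in *. set (c := (j mod s)%nat) in *. clearbody r c. subst j.
    rewrite inU_node in E by lia. apply andb_prop in E. destruct E as [E1 E2].
    apply Nat.eqb_eq in E2. destruct c as [|c]; [discriminate|].
    pose proof (Nat.div_mod r 2 ltac:(lia)). rewrite E2 in H.
    set (q := (r/2)%nat) in *. clearbody q. subst r.
    destruct p as [|p'].
    + exists ((q*2+1)*s + S c)%nat. assert (q*2+1 < s)%nat by lia. split.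
      * split; [apply (node_lt s hs); lia|]. rewrite inU_node by lia.
        destruct (coords 2 q 1) as [_ B]; auto. rewrite B. reflexivity.
      * replace (2*q+0)%nat with (q*2+0)%nat by lia. rewrite Nat.add_0_r. replace (q*2+1)%nat with (q*2+1)%nat by lia.
        apply (adj_down s hs); lia.
    + assert (p' = 0)%nat by lia. subst p'.
      exists ((q*2)*s + S c)%nat. split.
      * split; [apply (node_lt s hs); lia|]. rewrite inU_node by lia.
        destruct (coords 2 q 0) as [_ B]; auto. rewrite Nat.add_0_r in B. rewrite B. reflexivity.
      * apply (grid_adj_sym s hs). replace (2*q+1)%nat with (q*2+1)%nat by lia. apply (adj_down s hs); lia.
  - intros j [Hj Yj]. auto.
Qed.

Lemma conn_B : forall Ss : nat -> Prop,
  (forall j, (j < s*s)%nat -> inB j = false -> Ss j) -> (forall j, Ss j -> (j < s*s)%nat) ->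
  induces_connected (grid_adj s) Ss.
Proof.
  intros Ss HYS HSn.
  set (Y := fun j => (j < s*s)%nat /\ inB j = false).
  assert (Hn : forall r c, (r < s -> c < s -> inB (r*s+c) = (c =? 0))%nat).
  { intros. unfold inB. destruct (coords s r c) as [_ B]; [assumption|]. rewrite B. reflexivity. }
  apply (conn_from s hs Y Ss inB 1).
  - intros j [H _]; auto.
  - split; [nia|]. replace 1%nat with (0*s+1)%nat by lia. rewrite Hn by lia. reflexivity.
  - intros j [Hj Yj]. apply (Y_reach s hs); auto; try lia.
    + intros r Hr. split; [apply (node_lt s hs); lia|]. rewrite Hn by lia. reflexivity.
    + intros r c Hr Hc [_ Hy]. rewrite Hn in Hy by lia. destruct c; [discriminate|lia].
    + intros r c c' Hr Hc [_ Hy] Hc'. split; [apply (node_lt s hs); lia|].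
      rewrite Hn by lia. destruct c'; [lia|reflexivity].
    + split; auto.
  - intros j Sj. pose proof (HSn j Sj) as Hj. destruct (inB j) eqn:E; [right|left; split; auto].
    destruct (node_decomp s hs j Hj) as [Ej [Hr Hc]].
    set (r := (j/s)%nat) in *. set (c := (j mod s)%nat) in *. clearbody r c. subst j.
    rewrite Hn in E by lia. apply Nat.eqb_eq in E. subst c.
    exists (r*s+(0+1))%nat. split.
    + split; [apply (node_lt s hs); lia|]. rewrite Hn by lia. reflexivity.
    + apply (adj_right s hs); lia.
  - intros j [Hj Yj]. auto.
Qed.
End G.
End P3M. Import P3M.
Local Open Scope R_scope.



Lemma sum_upto_ext n f g : (forall j, (j < n)%nat -> f j = g j) -> sum_upto n f = sum_upto n g.
Proof. induction n; simpl; intros; auto. rewrite IHn, H; auto. Qed.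

Lemma sum_upto_plus n f g : sum_upto n (fun j => f j + g j) = sum_upto n f + sum_upto n g.
Proof. induction n; simpl; [lra|]. rewrite IHn; lra. Qed.

Fixpoint sumL (l : list nat) (f : nat -> R) : R :=
  match l with nil => 0 | a :: l' => f a + sumL l' f end.

Lemma sumL_app l l' f : sumL (l ++ l') f = sumL l f + sumL l' f.
Proof. induction l; simpl; [lra|]. rewrite IHl; lra. Qed.

Lemma sum_sumL n f : sum_upto n f = sumL (seq 0 n) f.
Proof. induction n; [reflexivity|]. rewrite (seq_S n 0), sumL_app, <- IHn. simpl. lra. Qed.

Lemma sumL_filter (P : nat -> bool) l h :
  sumL l (fun j => if P j then h j else 0) = sumL (filter P l) h.
Proof. induction l; simpl; auto. destruct (P a); simpl; rewrite IHl; lra. Qed.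

Lemma sumL_map d l h : sumL l (fun j => h (d j)) = sumL (map d l) h.
Proof. induction l; simpl; auto. rewrite IHl; lra. Qed.

Lemma sumL_perm l l' h : Permutation l l' -> sumL l h = sumL l' h.
Proof. induction 1; simpl; lra. Qed.

Lemma reindex n M (P : nat -> bool) (dec e : nat -> nat) (h : nat -> R) :
  (forall t, (t < M)%nat -> (e t < n)%nat /\ P (e t) = true /\ dec (e t) = t) ->
  (forall j, (j < n)%nat -> P j = true -> (dec j < M)%nat /\ e (dec j) = j) ->
  sum_upto n (fun j => if P j then h (dec j) else 0) = sum_upto M h.
Proof.
  intros He Hd. rewrite !sum_sumL, (sumL_filter P (seq 0 n) (fun j => h (dec j))),
    sumL_map. apply sumL_perm. apply NoDup_Permutation.
  - apply NoDup_map_NoDup_ForallPairs; [|apply NoDup_filter, seq_NoDup].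
    intros x y Hx Hy Hxy. apply filter_In in Hx, Hy. destruct Hx as [Hx1 Hx2], Hy as [Hy1 Hy2].
    apply in_seq in Hx1, Hy1.
    destruct (Hd x) as [_ Ex]; try lia; auto. destruct (Hd y) as [_ Ey]; try lia; auto.
    congruence.
  - apply seq_NoDup.
  - intros t. rewrite in_map_iff, in_seq. split.
    + intros [j [<- Hj]]. apply filter_In in Hj. destruct Hj as [Hj1 Hj2]. apply in_seq in Hj1.
      destruct (Hd j); auto; lia.
    + intros Ht. destruct (He t) as [A1 [A2 A3]]; try lia. exists (e t). split; auto.
      apply filter_In. split; auto. apply in_seq. lia.
Qed.

Lemma sparse_pull k n M (x : nat -> R) (e dec : nat -> nat) :
  (forall t, (t < M)%nat -> (e t < n)%nat /\ dec (e t) = t) ->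
  k_sparse k n x -> k_sparse k M (fun t => x (e t)).
Proof.
  intros He [S [HL [HN HS]]].
  exists (filter (fun t => if in_dec Nat.eq_dec (e t) S then true else false) (seq 0 M)).
  split; [|split].
  - eapply Nat.le_trans; [|exact HL].
    rewrite <- (length_map e). apply NoDup_incl_length.
    + apply NoDup_map_NoDup_ForallPairs; [|apply NoDup_filter, seq_NoDup].
      intros a b Ha Hb Hab. apply filter_In in Ha, Hb. destruct Ha as [Ha _], Hb as [Hb _].
      apply in_seq in Ha, Hb. destruct (He a) as [_ Ea]; try lia. destruct (He b) as [_ Eb]; try lia.
      congruence.
    + intros y Hy. apply in_map_iff in Hy. destruct Hy as [t [<- Ht]]. apply filter_In in Ht.
      destruct Ht as [_ Ht]. destruct (in_dec Nat.eq_dec (e t) S); congruence.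
  - apply NoDup_filter, seq_NoDup.
  - intros t Ht Hn. destruct (He t) as [E1 _]; auto. apply HS; auto. intro Hi. apply Hn.
    apply filter_In. split; [apply in_seq; lia|]. destruct (in_dec Nat.eq_dec (e t) S); tauto.
Qed.

Definition rowX (P : nat -> bool) (dec : nat -> nat) (D : nat -> bool) (j : nat) : bool :=
  (P j && D (dec j)) || negb (P j).

Lemma meas_decomp n M (P : nat -> bool) (dec e : nat -> nat) (D : nat -> bool) (x : nat -> R) :
  (forall t, (t < M)%nat -> (e t < n)%nat /\ P (e t) = true /\ dec (e t) = t) ->
  (forall j, (j < n)%nat -> P j = true -> (dec j < M)%nat /\ e (dec j) = j) ->
  sum_upto n (fun j => if rowX P dec D j then x j else 0) =
  sum_upto M (fun t => if D t then x (e t) else 0) + sum_upto n (fun j => if negb (P j) then x j else 0).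
Proof.
  intros Ha Hb. rewrite <- (reindex n M P dec e (fun t => if D t then x (e t) else 0)) by auto.
  rewrite <- sum_upto_plus. apply sum_upto_ext. intros j Hj. unfold rowX. destruct (P j) eqn:E; simpl.
  - destruct (Hb j Hj E) as [_ Ee]. rewrite Ee. destruct (D (dec j)); simpl; lra.
  - lra.
Qed.

Lemma ident_block k M mC C (y1 y2 : nat -> R) : identifies k mC M C ->
  k_sparse k M y1 -> k_sparse k M y2 ->
  (forall i, (i < mC)%nat -> mat_apply M C y1 i = mat_apply M C y2 i) ->
  forall t, (t < M)%nat -> y1 t = y2 t.
Proof.
  intros HC S1 S2 Heq t Ht. apply NNPP. intro Hne.
  destruct (HC y1 y2 S1 S2) as [i [Hi Hd]]. exists t; auto. apply Hd; auto.
Qed.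

Lemma block_eq n M P dec e D (x1 x2 : nat -> R) :
  (forall t, (t < M)%nat -> (e t < n)%nat /\ P (e t) = true /\ dec (e t) = t) ->
  (forall j, (j < n)%nat -> P j = true -> (dec j < M)%nat /\ e (dec j) = j) ->
  sum_upto n (fun j => if negb (P j) then x1 j else 0) = sum_upto n (fun j => if negb (P j) then x2 j else 0) ->
  sum_upto n (fun j => if rowX P dec D j then x1 j else 0) = sum_upto n (fun j => if rowX P dec D j then x2 j else 0) ->
  sum_upto M (fun t => if D t then x1 (e t) else 0) = sum_upto M (fun t => if D t then x2 (e t) else 0).
Proof.
  intros Ha Hb HT HR. rewrite !(meas_decomp n M P dec e) in HR by auto. lra.
Qed.

Definition bigA s mC1 mC2 (C1 C2 : nat -> nat -> bool) (i j : nat) : bool :=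
  if (i <? mC1)%nat then rowX (inU s 0) (decU s) (C1 i) j
  else if (i <? 2*mC1)%nat then rowX (inU s 1) (decU s) (C1 (i-mC1)%nat) j
  else if (i <? 2*mC1+mC2)%nat then rowX (inB s) (decB s) (C2 (i-2*mC1)%nat) j
  else if (i =? 2*mC1+mC2)%nat then negb (inU s 0 j) else negb (inU s 1 j).

Theorem mainTheorem7 (s k : nat) (hs2 : (2 <= s)%nat) (hseven : Nat.Even s)
  (hk : (1 <= k)%nat) (mG mC1 mC2 : nat) :
  MG_is k (s * s) (grid_adj s) mG ->
  MC_is k (s * s / 2 - s / 2) mC1 ->
  MC_is k s mC2 ->
  (mG <= 2 * mC1 + mC2 + 2)%nat.
Proof.
  intros [_ HG] [[C1 HC1] _] [[C2 HC2] _]. destruct hseven as [m hm].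
  assert (HM : (s * s / 2 - s / 2 = m * (s - 1))%nat).
  { assert (E1 : (s / 2 = m)%nat) by (rewrite hm, Nat.mul_comm, Nat.div_mul; lia).
    assert (E2 : (s * s / 2 = 2*m*m)%nat) by (rewrite hm; replace (2*m*(2*m))%nat with ((2*m*m)*2)%nat by ring; rewrite Nat.div_mul; lia).
    rewrite E1, E2. rewrite hm. nia. }
  rewrite HM in HC1. set (M1 := (m * (s-1))%nat) in *. set (n := (s*s)%nat).
  apply HG. exists (bigA s mC1 mC2 C1 C2). split.
  -
    intros i Hi _. unfold row_support, bigA.
    destruct (i <? mC1)%nat eqn:E1; [|destruct (i <? 2*mC1)%nat eqn:E2;
      [|destruct (i <? 2*mC1+mC2)%nat eqn:E3; [|destruct (i =? 2*mC1+mC2)%nat eqn:E4]]].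
    + apply (conn_U s m hm hs2 0); [lia| |tauto]. intros j Hj Hf. unfold rowX. rewrite Hf. auto.
    + apply (conn_U s m hm hs2 1); [lia| |tauto]. intros j Hj Hf. unfold rowX. rewrite Hf. auto.
    + apply (conn_B s m hm hs2); [|tauto]. intros j Hj Hf. unfold rowX. rewrite Hf. auto.
    + apply (conn_U s m hm hs2 0); [lia| |tauto]. intros j Hj Hf. rewrite Hf. auto.
    + apply (conn_U s m hm hs2 1); [lia| |tauto]. intros j Hj Hf. rewrite Hf. auto.
  - intros x1 x2 S1 S2 [j0 [Hj0 Hne]]. apply NNPP. intro Hno.
    assert (Heq : forall i, (i < 2*mC1+mC2+2)%nat -> mat_apply n (bigA s mC1 mC2 C1 C2) x1 i = mat_apply n (bigA s mC1 mC2 C1 C2) x2 i).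
    { intros i Hi. apply NNPP. intro. apply Hno. eauto. }
    assert (HaU : forall p, (p < 2)%nat -> forall t, (t < M1)%nat -> (eU s p t < n)%nat /\ inU s p (eU s p t) = true /\ decU s (eU s p t) = t)
      by (intros; apply (bijU_a s m hm hs2); auto).
    assert (HbU : forall p j, (j < n)%nat -> inU s p j = true -> (decU s j < M1)%nat /\ eU s p (decU s j) = j)
      by (intros; apply (bijU_b s m hm hs2); auto).
    assert (HU : forall p, (p < 2)%nat -> forall t, (t < M1)%nat -> x1 (eU s p t) = x2 (eU s p t)).
    { intros p Hp. apply (ident_block k M1 mC1 C1 (fun t => x1 (eU s p t)) (fun t => x2 (eU s p t)) HC1).
      - apply (sparse_pull k n M1 x1 (eU s p) (decU s)); auto. intros t Ht; destruct (HaU p Hp t Ht) as [? [? ?]]; auto.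
      - apply (sparse_pull k n M1 x2 (eU s p) (decU s)); auto. intros t Ht; destruct (HaU p Hp t Ht) as [? [? ?]]; auto.
      - intros i Hi. unfold mat_apply.
        apply (block_eq n M1 (inU s p) (decU s) (eU s p) (C1 i) x1 x2).
        + apply HaU; auto.
        + apply HbU.
        + assert (HT := Heq (2*mC1+mC2 + p)%nat ltac:(lia)). unfold mat_apply, bigA in HT.
          destruct p as [|[|]]; try lia.
          * rewrite Nat.add_0_r, (proj2 (Nat.ltb_ge _ _)), (proj2 (Nat.ltb_ge _ _)),
              (proj2 (Nat.ltb_ge _ _)), Nat.eqb_refl in HT by lia. exact HT.
          * rewrite (proj2 (Nat.ltb_ge _ _)), (proj2 (Nat.ltb_ge _ _)),
              (proj2 (Nat.ltb_ge _ _)), (proj2 (Nat.eqb_neq _ _)) in HT by lia. exact HT.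
        + destruct p as [|[|]]; try lia.
          * assert (HR := Heq i ltac:(lia)). unfold mat_apply, bigA in HR.
            rewrite (proj2 (Nat.ltb_lt _ _)) in HR by lia. exact HR.
          * assert (HR := Heq (mC1 + i)%nat ltac:(lia)). unfold mat_apply, bigA in HR.
            rewrite (proj2 (Nat.ltb_ge _ _)), (proj2 (Nat.ltb_lt _ _)) in HR by lia.
            replace (mC1 + i - mC1)%nat with i in HR by lia. exact HR. }
    assert (HnB : forall j, (j < n)%nat -> inB s j = false -> x1 j = x2 j).
    { intros j Hj HB. set (p := ((j / s) mod 2)%nat).
      assert (Hp : (p < 2)%nat) by (apply Nat.mod_upper_bound; lia).
      assert (Hin : inU s p j = true).
      { unfold inU, inB in *. rewrite HB. simpl. apply Nat.eqb_refl. }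
      destruct (HbU p j Hj Hin) as [D1 D2]. rewrite <- D2. apply HU; auto. }
    assert (HB : forall t, (t < s)%nat -> x1 (eB s t) = x2 (eB s t)).
    { apply (ident_block k s mC2 C2 (fun t => x1 (eB s t)) (fun t => x2 (eB s t)) HC2).
      - apply (sparse_pull k n s x1 (eB s) (decB s)); auto. intros t Ht; destruct (bijB_a s m hm hs2 t Ht) as [? [? ?]]; auto.
      - apply (sparse_pull k n s x2 (eB s) (decB s)); auto. intros t Ht; destruct (bijB_a s m hm hs2 t Ht) as [? [? ?]]; auto.
      - intros i Hi. unfold mat_apply.
        apply (block_eq n s (inB s) (decB s) (eB s) (C2 i) x1 x2).
        + apply (bijB_a s m hm hs2).
        + apply (bijB_b s m hm hs2).
        + apply sum_upto_ext. intros j Hj. destruct (inB s j) eqn:E; simpl; auto.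
        + assert (HR := Heq (2*mC1 + i)%nat ltac:(lia)). unfold mat_apply, bigA in HR.
          rewrite (proj2 (Nat.ltb_ge _ _)), (proj2 (Nat.ltb_ge _ _)), (proj2 (Nat.ltb_lt _ _)) in HR by lia.
          replace (2*mC1 + i - 2*mC1)%nat with i in HR by lia. exact HR. }
    apply Hne. destruct (inB s j0) eqn:E.
    + destruct (bijB_b s m hm hs2 j0 Hj0 E) as [D1 D2]. rewrite <- D2. apply HB; auto.
    + apply HnB; auto.
Qed.
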